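(* Let $q \ge 2$ and $r \ge 3$ be integers. For $n \ge 1$ let $g^{q\text{-}\mathrm{ff}}_r(n)$ be the maximum cardinality of a family $\mathcal{F} \subseteq [q]^n$ containing no $q$-ary focal family of size $r$. Then there is a positive constant $c^{q\text{-}\mathrm{ff}}_r$ (depending only on $q$ and $r$) such that for every $n$, $$c^{q\text{-}\mathrm{ff}}_r \left(\frac{q}{((q-1)(r-1)+1)^{1/(r-1)}}\right)^n \le g^{q\text{-}\mathrm{ff}}_r(n) \le (r-1)\, q^{\lceil \frac{(r-2)n}{r-1} \rceil}.$$
   Context: Here $[q]=\{1,\dots,q\}$. A family $x^{(0)}, x^{(1)}, \dots, x^{(r-1)}$ of $r$ distinct vectors in $[q]^n$ is a ($q$-ary) focal family with focus $x^{(0)}$ if for every coordinate $i \in [n]$, at least $r-2$ of the $r-1$ entries $x^{(1)}_i, \dots, x^{(r-1)}_i$ are equal to $x^{(0)}_i$. A family contains a focal family of size $r$ if some $r$ distinct members, with some choice of focus among them, form a focal family. *)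

(* Defs.v *)
From mathcomp Require Import all_boot.
Set Implicit Arguments. Unset Strict Implicit. Unset Printing Implicit Defensive.

(* [q]^n, with [q] = {1..q} represented by 'I_q = {0..q-1}. *)
Definition vec (q n : nat) := {ffun 'I_n -> 'I_q}.

(* x0 together with y_1..y_{r-1} (indexed by 'I_(r-1)) is a focal family of
   r distinct vectors with focus x0: all r vectors distinct, and for every
   coordinate i at least r-2 of the y_j agree with x0 at i. *)
Definition focalb (q n r : nat) (x0 : vec q n) (y : {ffun 'I_(r-1) -> vec q n}) : bool :=
  [&& injectiveb y, [forall j, y j != x0] &
      [forall i : 'I_n, r - 2 <= #|[set j : 'I_(r-1) | y j i == x0 i]| ]].

Definition contains_focal (q n r : nat) (F : {set vec q n}) : bool :=
  [exists x0 : vec q n, exists y : {ffun 'I_(r-1) -> vec q n},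
     [&& x0 \in F, [forall j, y j \in F] & focalb x0 y]].

Definition g_ff (q r n : nat) : nat :=
  \max_(F : {set vec q n} | ~~ contains_focal r F) #|F|.

Definition ceil_div (a b : nat) : nat := (a + b - 1) %/ b.

(* Main.v *)
Require Import Defs.
From mathcomp Require Import all_boot zify.
Set Implicit Arguments. Unset Strict Implicit. Unset Printing Implicit Defensive.

Lemma binom_ineq N m k : k <= m -> m <= N -> 'C(N-k, m-k) * N^k <= 'C(N,m) * m^k.
Proof.
elim: k => [|k IH] hk hm; first by rewrite !subn0 !expn0 !muln1.
have IH' := IH (ltnW hk) hm.
have e := mul_bin_diag (N - k) (m - k.+1).
have e1 : (N - k).-1 = N - k.+1 by lia.
have e2 : (m - k.+1).+1 = m - k by lia.
rewrite e1 e2 in e.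
set A := 'C(N - k.+1, m - k.+1) in e *.
set B := 'C(N - k, m - k) in e IH'.
have h1 : (m - k) * N <= m * (N - k) by nia.
have h2 : (N - k) * (A * N) <= (N - k) * (m * B).
  rewrite mulnA e; have := leq_mul h1 (leqnn B); nia.
have h3 : A * N <= m * B by rewrite leq_mul2l in h2; case/orP: h2 => // /eqP; lia.
rewrite expnS mulnA.
apply: leq_trans (leq_mul h3 (leqnn _)) _.
have := leq_mul (leqnn m) IH'; rewrite expnS; nia.
Qed.

Section Sets.
Variable T : finType.

Lemma sup_count (A : {set T}) k m : #|A| = k -> m <= #|T| ->
  #|[set S : {set T} | A \subset S & #|S| == m]| * #|T| ^ k <= 'C(#|T|, m) * m ^ k.
Proof.
move=> hA hm.
case: (ltnP m k) => hkm.
  have -> : #|[set S : {set T} | A \subset S & #|S| == m]| = 0.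
    apply: eq_card0 => S; rewrite inE; apply/negP => /andP[sub /eqP e].
    by have := subset_leq_card sub; lia.
  by [].
apply: leq_trans (binom_ineq hkm hm).
rewrite leq_mul2r; apply/orP; right.
pose f (S : {set T}) := S :\: A.
have inj : {in [set S : {set T} | A \subset S & #|S| == m] &, injective f}.
  move=> S1 S2; rewrite !inE => /andP[s1 _] /andP[s2 _] e.
  apply/setP => x; case: (boolP (x \in A)) => xA.
    by rewrite (subsetP s1 _ xA) (subsetP s2 _ xA).
  by move/setP: e => /(_ x); rewrite !inE xA.
rewrite -(card_in_imset inj).
have : f @: [set S : {set T} | A \subset S & #|S| == m] \subset
       [set S : {set T} | S \subset ~: A & #|S| == m - k].
  apply/subsetP => S' /imsetP [S]; rewrite inE => /andP[sub /eqP cS] ->.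
  rewrite inE; apply/andP; split.
    by apply/subsetP => x; rewrite !inE => /andP[].
  by rewrite /f cardsDS // cS hA.
move/subset_leq_card; rewrite cards_draws.
have := cardsC A; rewrite hA => hc.
by have -> : #|~: A| = #|T| - k by lia.
Qed.

Lemma averaging (C : finType) (Bs : {set C}) (supp : C -> {set T}) k m :
  (forall c, c \in Bs -> #|supp c| = k) -> m <= #|T| ->
  exists S : {set T}, #|S| = m /\
    #|[set c in Bs | supp c \subset S]| * #|T| ^ k <= #|Bs| * m ^ k.
Proof.
move=> hs hm.
pose Dm := [set S : {set T} | #|S| == m].
have cD : #|Dm| = 'C(#|T|, m) by rewrite card_draws.
have : 0 < #|Dm| by rewrite cD bin_gt0.
case/card_gt0P => S0 S0D.
pose bad (S : {set T}) := #|[set c in Bs | supp c \subset S]|.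
case: (arg_minnP bad S0D) => S SD Smin.
have SD' : S \in Dm := SD.
exists S; split; first by move: SD'; rewrite inE => /eqP.
have sum1 : bad S * #|Dm| <= \sum_(S' in Dm) bad S'.
  rewrite mulnC -sum_nat_const.
  by apply: leq_sum => S' /Smin.
have sum2 : \sum_(S' in Dm) bad S' =
            \sum_(c in Bs) #|[set S' : {set T} | supp c \subset S' & #|S'| == m]|.
  have e1 S' : bad S' = \sum_(c in Bs) (supp c \subset S' : nat).
    rewrite /bad -sum1_card [RHS]big_mkcond [LHS]big_mkcond /=; apply: eq_bigr => c _.
    by rewrite inE; case: (c \in Bs); case: (supp c \subset S').
  rewrite (eq_bigr _ (fun S' _ => e1 S')) exchange_big /=.
  apply: eq_bigr => c _.
  rewrite -sum1_card [RHS]big_mkcond [LHS]big_mkcond /=; apply: eq_bigr => S' _.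
  by rewrite !inE andbC; case: (supp c \subset S'); case: (_ == m).
have sum3 : (\sum_(c in Bs) #|[set S' : {set T} | supp c \subset S' & #|S'| == m]|) * #|T| ^ k
            <= #|Bs| * ('C(#|T|, m) * m ^ k).
  rewrite big_distrl /= -sum_nat_const; apply: leq_sum => c cB.
  by apply: sup_count => //; apply: hs.
have : bad S * #|T| ^ k * #|Dm| <= #|Bs| * m ^ k * #|Dm|.
  rewrite mulnAC; apply: leq_trans (leq_mul sum1 (leqnn _)) _.
  rewrite sum2; apply: leq_trans sum3 _; rewrite cD; lia.
rewrite leq_mul2r; case/orP => //; rewrite cD; move/eqP => e; have := bin_gt0 #|T| m; rewrite e hm //.
Qed.
End Sets.


Section Upper.
Variables (q r n : nat).
Hypothesis hr : 3 <= r.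
Hypothesis hq : 0 < q.
Let hk : 0 < r - 1. Proof. lia. Qed.

Definition agree (j : 'I_(r-1)) (y x : vec q n) :=
  [forall i : 'I_n, (i %% (r-1) != j) ==> (y i == x i)].

Definition uniqP (F : {set vec q n}) (x : vec q n) (j : 'I_(r-1)) :=
  [forall y in F, agree j y x ==> (y == x)].

Lemma unique_block (F : {set vec q n}) x :
  ~~ contains_focal r F -> x \in F -> exists j, uniqP F x j.
Proof.
move=> nF xF; case: (boolP [exists j, uniqP F x j]) => [/existsP//|/existsPn H].
exfalso; move/negP: nF; apply.
pose P j y := [&& y \in F, y != x & agree j y x].
have ex j : exists y, P j y.
  have /forallPn [y] := H j; rewrite !negb_imply => /andP[yF /andP[ag nyx]].
  by exists y; rewrite /P yF nyx ag.
pose yf := [ffun j => odflt x [pick y | P j y]].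
have Pyf j : P j (yf j).
  rewrite /yf ffunE; case: pickP => [y //|/= none].
  by case: (ex j) => y Py; rewrite none in Py.
apply/existsP; exists x; apply/existsP; exists yf.
rewrite xF /=; apply/andP; split.
  by apply/forallP => j; case/and3P: (Pyf j).
rewrite /focalb; apply/and3P; split.
- apply/injectiveP => j1 j2 e.
  case/and3P: (Pyf j1) => _ n1 /forallP a1.
  case/and3P: (Pyf j2) => _ _ /forallP a2.
  have [i ni] : exists i, yf j1 i != x i.
    by apply/existsP; move: n1; apply: contraR => /existsPn h; apply/eqP/ffunP => i; apply/eqP; move: (h i); rewrite negbK.
  have b1 : i %% (r-1) = j1 by move: (a1 i); rewrite (negbTE ni) implybF negbK => /eqP.
  have b2 : i %% (r-1) = j2 by move: (a2 i); rewrite -e (negbTE ni) implybF negbK => /eqP.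
  by apply: val_inj; rewrite /= -b1 -b2.
- by apply/forallP => j; case/and3P: (Pyf j).
- apply/forallP => i.
  pose j0 : 'I_(r-1) := Ordinal (ltn_pmod i hk).
  have : [set~ j0] \subset [set j | yf j i == x i].
    apply/subsetP => j; rewrite !inE => nj.
    case/and3P: (Pyf j) => _ _ /forallP /(_ i).
    have -> : (i %% (r-1) != j) = true.
      by apply/negP=> /eqP e; move/eqP: nj; apply; apply/val_inj; rewrite /= e.
    by [].
  move/subset_leq_card; rewrite cardsC1 card_ord.
  by apply: leq_trans; lia.
Qed.

Lemma lt_aux (j t : nat) : j < r - 1 -> t < n %/ (r-1) -> j + t * (r-1) < n.
Proof.
move=> hj ht.
have h1 : t.+1 * (r-1) <= n %/ (r-1) * (r-1) by rewrite leq_mul2r ht orbT.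
have h2 := leq_divM n (r-1).
rewrite mulSn in h1. lia.
Qed.

Lemma block_card (j : 'I_(r-1)) : n %/ (r-1) <= #|[set i : 'I_n | i %% (r-1) == j]|.
Proof.
pose f (t : 'I_(n %/ (r-1))) : 'I_n := Ordinal (lt_aux (ltn_ord j) (ltn_ord t)).
have inj : injective f.
  move=> t1 t2 /(congr1 val) /= e; apply: val_inj => /=.
  have : t1 * (r-1) = t2 * (r-1) by lia.
  by move/eqP; rewrite eqn_mul2r (negbTE (lt0n_neq0 hk)) /= => /eqP.
have : f @: [set: 'I_(n %/ (r-1))] \subset [set i : 'I_n | i %% (r-1) == j].
  apply/subsetP => i /imsetP [t _ ->]; rewrite inE /=.
  by rewrite addnC modnMDl modn_small.
move/subset_leq_card; rewrite card_imset // cardsT card_ord. done.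
Qed.

Lemma card_F (F : {set vec q n}) : ~~ contains_focal r F ->
  #|F| <= (r-1) * q ^ (n - n %/ (r-1)).
Proof.
move=> nF.
pose j00 : 'I_(r-1) := Ordinal hk.
pose jx x := odflt j00 [pick j | uniqP F x j].
have jxP x : x \in F -> uniqP F x (jx x).
  move=> xF; rewrite /jx; case: pickP => [j //|/= none].
  by case: (unique_block nF xF) => j u; rewrite none in u.
rewrite -sum1_card (partition_big jx xpredT) //=.
rewrite -[r - 1 in X in X * _]card_ord -sum_nat_const.
apply: leq_sum => j _.
pose Fj := [set x in F | jx x == j].
pose pj (x : vec q n) : {ffun {i : 'I_n | i %% (r-1) != j} -> 'I_q} := [ffun i => x (val i)].
have e : \sum_(x in F | jx x == j) 1 = #|Fj|.
  by rewrite -sum1_card; apply: eq_bigl => x; rewrite inE.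
rewrite e.
have inj : {in Fj &, injective pj}.
  move=> x y; rewrite !inE => /andP[xF /eqP jxj] /andP[yF _] ep.
  have := jxP x xF; rewrite jxj => /forallP /(_ y); rewrite yF implyTb.
  have ag : agree j y x.
    apply/forallP => i; apply/implyP => ni.
    by move/ffunP: ep => /(_ (exist (fun i : 'I_n => i %% (r-1) != j) i ni)); rewrite !ffunE /= => ->.
  by rewrite ag => /eqP.
rewrite -(card_in_imset inj).
apply: leq_trans (max_card _) _.
rewrite card_ffun card_ord card_sig.
apply: leq_pexp2l; first by case: q hq.
have := block_card j.
have := cardC [pred i : 'I_n | i %% (r-1) == j].
rewrite card_ord.
have -> : #|[set i : 'I_n | i %% (r-1) == j]| = #|[pred i : 'I_n | i %% (r-1) == j]|.
  by apply: eq_card => i; rewrite inE.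
have -> : #|[pred x : 'I_n | x %% (r-1) != j]| = #|[predC [pred i : 'I_n | i %% (r-1) == j]]|.
  by apply: eq_card.
move=> h1 h2.
apply: leq_trans (leq_sub2l n h2); rewrite -[X in X - #|_|]h1 addKn //.
Qed.

Lemma upper_bound : g_ff q r n <= (r-1) * q ^ ceil_div ((r-2)*n) (r-1).
Proof.
apply/bigmax_leqP => F nF; apply: leq_trans (card_F nF) _.
rewrite leq_mul2l; apply/orP; right; apply: leq_pexp2l => //.
rewrite /ceil_div leq_divRL //.
have := divn_eq n (r-1); have := ltn_pmod n hk.
set a := n %/ (r-1); set b := n %% (r-1) => hb hn.
rewrite {1 2}hn.
have -> : a * (r - 1) + b - a = a * (r - 2) + b by nia.
nia.
Qed.
End Upper.


Section Lower.
Variables (q r n : nat).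
Hypothesis hr : 3 <= r.
Hypothesis hq : 2 <= q.

Definition cfg := (vec q n * {ffun 'I_(r-1) -> vec q n})%type.
Definition Bset := [set c : cfg | focalb c.1 c.2].
Definition supp (c : cfg) : {set vec q n} := c.1 |: [set c.2 j | j : 'I_(r-1)].

Lemma supp_card c : c \in Bset -> #|supp c| = r.
Proof.
rewrite inE => /and3P[/injectiveP inj /forallP ne _].
rewrite cardsU1 card_imset // card_ord.
have -> : c.1 \notin [set c.2 j | j : 'I_(r-1)].
  by apply/imsetP => -[j _ e]; move: (ne j); rewrite -e eqxx.
lia.
Qed.

Lemma at_most_one x0 (y : {ffun 'I_(r-1) -> vec q n}) i j1 j2 :
  focalb x0 y -> y j1 i != x0 i -> y j2 i != x0 i -> j1 = j2.
Proof.
case/and3P => _ _ /forallP /(_ i) hc n1 n2.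
apply/eqP; apply: contraT => nj.
have : [set j | y j i == x0 i] \subset ~: [set j1; j2].
  apply/subsetP => j; rewrite !inE => /eqP e.
  by apply/negP => /orP[] /eqP ej; [move: n1|move: n2]; rewrite -ej e eqxx.
move/subset_leq_card; have := cardsC [set j1; j2]; rewrite cards2 nj card_ord /=.
move=> a b; move: (leq_trans hc b); lia.
Qed.

Definition K := (q-1)*(r-1)+1.

Definition Ci (a : 'I_q) : {set option ('I_(r-1) * 'I_q)} :=
  None |: [set Some p | p in setX [set: 'I_(r-1)] [set~ a]].

Lemma card_Ci a : #|Ci a| = K.
Proof.
rewrite /Ci cardsU1 card_imset; last by move=> ? ? [].
rewrite cardsX cardsT cardsC1 !card_ord.
have -> : None \notin [set Some p | p in setX [set: 'I_(r-1)] [set~ a]].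
  by apply/imsetP => -[].
rewrite /K; lia.
Qed.

Definition code (x0 : vec q n) (y : {ffun 'I_(r-1) -> vec q n}) :
  {ffun 'I_n -> option ('I_(r-1) * 'I_q)} :=
  [ffun i => if [pick j | y j i != x0 i] is Some j then Some (j, y j i) else None].

Lemma count_y x0 : #|[set y : {ffun 'I_(r-1) -> vec q n} | focalb x0 y]| <= K ^ n.
Proof.
have inj : {in [set y : {ffun 'I_(r-1) -> vec q n} | focalb x0 y] &, injective (code x0)}.
  move=> y1 y2; rewrite !inE => f1 f2 e.
  apply/ffunP => j; apply/ffunP => i.
  move/ffunP: e => /(_ i); rewrite !ffunE.
  case: pickP => [j1 h1|n1]; case: pickP => [j2 h2|n2] //.
  - case=> e1 e2; subst j2.
    case: (eqVneq j j1) => [-> //|njj].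
    case: (eqVneq (y1 j i) (x0 i)) => [e3|h3]; last by move: njj; rewrite (at_most_one f1 h3 h1) eqxx.
    case: (eqVneq (y2 j i) (x0 i)) => [e4|h4]; last by move: njj; rewrite (at_most_one f2 h4 h2) eqxx.
    by rewrite e3 e4.
  - move=> _; move: (n1 j) (n2 j) => /= /negbFE/eqP -> /negbFE/eqP -> //.
rewrite -(card_in_imset inj).
have : code x0 @: [set y : {ffun 'I_(r-1) -> vec q n} | focalb x0 y] \subset
       (family (fun i => mem (Ci (x0 i)))).
  apply/subsetP => c /imsetP [y _ ->]; apply/familyP => i.
  rewrite ffunE; case: pickP => [j h|_] /=; rewrite /Ci !inE //.
  apply/orP; right; apply/imsetP; exists (j, y j i) => //.
  by rewrite !inE.
move/subset_leq_card.
rewrite card_family foldrE big_map big_enum /=.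
under eq_bigr => i _ do rewrite card_Ci.
by rewrite prod_nat_const card_ord.
Qed.

Lemma card_B : #|Bset| <= q ^ n * K ^ n.
Proof.
rewrite -sum1_card (partition_big (fun c : cfg => c.1) xpredT) //=.
apply: leq_trans (_ : \sum_(x0 : vec q n) K ^ n <= _).
  apply: leq_sum => x0 _.
  have e : \sum_(c | (c \in Bset) && (c.1 == x0)) 1 = #|[set c | (c \in Bset) && (c.1 == x0)]|.
    by rewrite -sum1_card; apply: eq_bigl => c; rewrite inE.
  rewrite e; apply: leq_trans (count_y x0).
  have inj : {in [set c | (c \in Bset) && (c.1 == x0)] &, injective (@snd _ _)}.
    move=> [a1 b1] [a2 b2]; rewrite !inE /= => /andP[_ /eqP ->] /andP[_ /eqP ->] /= ->.
    by [].
  rewrite -(card_in_imset inj); apply: subset_leq_card; apply/subsetP => y /imsetP [c].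
  by rewrite !inE => /andP[hb /eqP e1] ->; rewrite -e1.
by rewrite sum_nat_const card_ffun !card_ord.
Qed.

Lemma lower_nat m : m <= q ^ n -> 2 * K ^ n * m ^ (r-1) <= (q ^ n) ^ (r-1) ->
  m <= 2 * g_ff q r n.
Proof.
have cT : #|{: vec q n}| = q ^ n by rewrite card_ffun !card_ord.
move=> hm hK.
have hm' : m <= #|{: vec q n}| by rewrite cT.
have [S [cS hS]] := averaging (Bs := Bset) (supp := supp) (k := r) supp_card hm'.
pose Bad := [set c in Bset | supp c \subset S].
pose X0 := [set c.1 | c in Bad].
pose F := S :\: X0.
have nF : ~~ contains_focal r F.
  apply/negP => /existsP [x0] /existsP [y] /and3P [x0F /forallP yF foc].
  have cB : (x0, y) \in Bad.
    rewrite /Bad inE /Bset inE foc /=; apply/subsetP => v; rewrite /supp !inE.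
    case/orP => [/eqP -> | /imsetP [j _ ->]].
      by move: x0F; rewrite inE => /andP[_].
    by move: (yF j); rewrite inE => /andP[_].
  move: x0F; rewrite inE => /andP[/negP nX _]; apply: nX; apply/imsetP; exists (x0, y) => //.
have gF : #|F| <= g_ff q r n by rewrite /g_ff; exact: (@leq_bigmax_cond _ (fun F0 : {set vec q n} => ~~ contains_focal r F0) (fun F0 => #|F0|) F nF).
have cF : #|S| - #|Bad| <= #|F|.
  rewrite /F cardsD; have h1 : #|S :&: X0| <= #|X0| by apply: subset_leq_card; apply: subsetIr.
  have h2 : #|X0| <= #|Bad| := leq_imset_card _ _.
  lia.
have hb : 2 * #|Bad| <= m.
  rewrite cT in hS; have hB := card_B.
  set N := q ^ n in hS hB hK; set P := N ^ (r-1) in hK.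
  set M := m ^ (r-1) in hK.
  have eN : N ^ r = N * P by rewrite /P -expnS; congr (_ ^ _); lia.
  have em : m ^ r = M * m by rewrite /M -expnSr; congr (_ ^ _); lia.
  rewrite eN em in hS.
  have N0 : 0 < N by rewrite /N expn_gt0; lia.
  have P0 : 0 < P by rewrite /P expn_gt0 N0.
  have h1 := leq_mul (leq_mul (leqnn N) hK) (leqnn m).
  have h2 := leq_mul hB (leqnn (M * m)).
  have h4 : 2 * #|Bad| * (N*P) <= 2 * (N * K^n * (M*m)) by rewrite -mulnA leq_mul2l /= (leq_trans hS h2).
  have e5 : 2 * (N * K^n * (M*m)) = N * (2*K^n*M) * m by rewrite !mulnA [2 * N]mulnC -!mulnA; do 2 congr (_ * _); rewrite !mulnA [K ^ n * 2]mulnC.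
  have h3 : 2 * #|Bad| * (N * P) <= m * (N * P).
    by apply: leq_trans h4 _; rewrite e5; apply: leq_trans h1 _; rewrite mulnC.
  by rewrite leq_pmul2r ?muln_gt0 ?N0 ?P0 in h3.
lia.
Qed.
End Lower.

Unset Implicit Arguments.
From Stdlib Require Import Reals Lra.

Lemma INR_muln a b : INR (a * b)%nat = (INR a * INR b)%R.
Proof. exact: mult_INR. Qed.

Lemma powE a b : Nat.pow a b = expn a b.
Proof. elim: b => [|b IH]; first by rewrite expn0. by rewrite expnS -IH. Qed.

Lemma INR_expn a b : INR (expn a b) = (INR a ^ b)%R.
Proof.
elim: b => [|b IH]; first by rewrite expn0.
by rewrite expnS INR_muln IH.
Qed.

Lemma INR_lt a b : a < b -> (INR a < INR b)%R.
Proof. by move/ltP; apply: lt_INR. Qed.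
Lemma INR_le a b : a <= b -> (INR a <= INR b)%R.
Proof. by move/leP; apply: le_INR. Qed.

Lemma g_ge1 q r n : 3 <= r -> 0 < q -> 1 <= g_ff q r n.
Proof.
move=> hr hq.
pose x0 : vec q n := [ffun => Ordinal hq].
have nF : ~~ contains_focal r [set x0].
  apply/negP => /existsP [x] /existsP [y] /and3P [xF /forallP yF /and3P[_ /forallP ne _]].
  have hk : 0 < r - 1 by lia.
  move: (yF (Ordinal hk)) (ne (Ordinal hk)); rewrite !inE => /eqP ->.
  by move: xF; rewrite inE => /eqP ->; rewrite eqxx.
have := @leq_bigmax_cond _ (fun F0 : {set vec q n} => ~~ contains_focal r F0) (fun F0 => #|F0|) _ nF.
by rewrite cards1.
Qed.

Theorem theorem3p1 (q r : nat) (hq : 2 <= q) (hr : 3 <= r) :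
  exists c : R, (0 < c)%R /\
    forall n : nat, 1 <= n ->
      (c * (INR q / Rpower (INR ((q - 1) * (r - 1) + 1)) (/ INR (r - 1))) ^ n
         <= INR (g_ff q r n))%R /\
      g_ff q r n <= (r - 1) * q ^ ceil_div ((r - 2) * n) (r - 1).
Proof.
exists (/ 8)%R; split; first lra.
move=> n hn; split; last by rewrite powE; apply: upper_bound => //; lia.
set r1 := (r - 1)%nat.
set Kn := ((q - 1) * (r - 1) + 1)%nat.
have eK : Kn = K q r by [].
set N := expn q n.
pose P k := (2 * expn Kn n * expn k r1 <= expn N r1)%nat.
have r1pos : (0 < r1)%nat by rewrite /r1; lia.
have exP : exists k, P k by exists 0; rewrite /P exp0n // muln0.
have ubP : forall k, P k -> k <= N.
  move=> k; rewrite /P => h; rewrite -(leq_exp2r _ _ r1pos).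
  apply: leq_trans h; have kp : 0 < expn Kn n by rewrite expn_gt0 /Kn addn1.
  by apply: leq_pmull; rewrite muln_gt0 kp.
case: (ex_maxnP exP ubP) => m Pm maxm.
have A : (expn N r1 < 2 * expn Kn n * expn m.+1 r1)%nat.
  rewrite ltnNge; apply/negP => h; have := maxm _ h; lia.
have B : (m <= 2 * g_ff q r n)%nat.
  apply: lower_nat => //; first by apply: ubP.
have C := @g_ge1 q r n hr (ltnW hq).
have D : (2 * m.+1 <= 8 * g_ff q r n)%nat by lia.
have Kpos : (0 < INR Kn)%R by apply: (INR_lt 0); rewrite /Kn addn1.
set R0 := Rpower (INR Kn) (/ INR r1).
have R0pos : (0 < R0)%R by rewrite /R0 /Rpower; apply: exp_pos.
have r1R : (INR r1 <> 0)%R by apply: not_0_INR; lia.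
have R0pow : (R0 ^ r1 = INR Kn)%R.
  rewrite -Rpower_pow // /R0 Rpower_mult Rinv_l // Rpower_1 //.
have qpos : (0 < INR q)%R by apply: (INR_lt 0); lia.
have key : ((INR q / R0) ^ n <= 2 * (INR m + 1))%R.
  case: (Rle_lt_dec ((INR q / R0) ^ n) (2 * (INR m + 1))) => // hlt.
  exfalso.
  have A' := INR_lt _ _ A.
  have i2 : INR 2 = 2%R by rewrite /=; lra.
  rewrite !INR_muln !INR_expn (S_INR m) i2 in A'.
  have h1 : ((2 * (INR m + 1)) ^ r1 <= ((INR q / R0) ^ n) ^ r1)%R.
    apply: pow_incr; split; last by lra.
    have : (0 <= INR m)%R by apply: pos_INR.
    lra.
  have e1 : (((INR q / R0) ^ n) ^ r1 * INR Kn ^ n = (INR q ^ n) ^ r1)%R.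
    rewrite -R0pow /Rdiv -!pow_mult Rpow_mult_distr pow_inv.
    have -> : (r1 * n)%coq_nat = (n * r1)%coq_nat by lia.
    field; apply: pow_nonzero; lra.
  have h2 : (2 <= 2 ^ r1)%R.
    have -> : r1 = (r1 - 1).+1 by lia.
    rewrite /= ; have := pow_R1_Rle 2 (r1 - 1); lra.
  have h3 : ((2 * (INR m + 1)) ^ r1 = 2 ^ r1 * (INR m + 1) ^ r1)%R by rewrite Rpow_mult_distr.
  have h4 : (0 < (INR m + 1) ^ r1)%R by apply: pow_lt; have := pos_INR m; lra.
  have h5 : (0 < INR Kn ^ n)%R by apply: pow_lt.
  have h6 : (2 * (INR m + 1) ^ r1 <= 2 ^ r1 * (INR m + 1) ^ r1)%R by apply: Rmult_le_compat_r; lra.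
  have h7 := Rmult_le_compat_r (INR Kn ^ n) _ _ (Rlt_le _ _ h5) h1.
  rewrite e1 h3 in h7.
  have h8 := Rmult_le_compat_r (INR Kn ^ n) _ _ (Rlt_le _ _ h5) h6.
  nra.
have D' := INR_le _ _ D.
have i2 : INR 2 = 2%R by rewrite /=; lra.
have i8 : INR 8 = 8%R by rewrite /=; lra.
rewrite !INR_muln (S_INR m) i2 i8 in D'.
have : (0 <= (INR q / R0) ^ n)%R by apply: pow_le; apply: Rlt_le; apply: Rdiv_lt_0_compat.
lra.
Qed.
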